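(* Let $P=(p_1,\dots,p_n)$ be points in $\mathbb{R}^d$, $k\ge1$, and $\mathcal{F}$ a constraint for $k$-CMedian. Let $\lambda\ge1$ and let $\mathcal{C}=\{c_1,\dots,c_k\}$ be the centers (median points) of a $\lambda$-approximate solution of the ordinary (unconstrained) $k$-median problem on $P$. Then $[\mathcal{C}]^k=\mathcal{C}\times\cdots\times\mathcal{C}$ contains a $k$-tuple $(q_1,\dots,q_k)$ for which some $(S_1,\dots,S_k)\in\mathcal{F}$ satisfies $\frac1n\sum_{j=1}^k\sum_{i\in S_j}\|p_i-q_j\|\le(3\lambda+2)\mu_{opt}$.
   Context: A constraint for $k$-CMedian is a nonempty family $\mathcal{F}$ of ordered partitions $(S_1,\dots,S_k)$ of $\{1,\dots,n\}$ into $k$ parts; $\mu_{opt}=\min_{(S_j)\in\mathcal{F}}\min_{c'_1,\dots,c'_k\in\mathbb{R}^d}\frac1n\sum_j\sum_{i\in S_j}\|p_i-c'_j\|$. The unconstrained $k$-median cost of a $k$-point set $\mathcal{C}$ is $\omega=\frac1n\sum_i\min_{c\in\mathcal{C}}\|p_i-c\|$, and $\mathcal{C}$ is $\lambda$-approximate if $\omega$ is at most $\lambda$ times the minimum of this cost over all $k$-point sets. *)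

(* Defs.v *)
From HB Require Import structures.
From mathcomp Require Import all_boot all_order all_algebra.
From mathcomp Require Import classical_sets reals.
Set Implicit Arguments. Unset Strict Implicit. Unset Printing Implicit Defensive.
Import Order.TTheory GRing.Theory Num.Theory.
Local Open Scope ring_scope.
Local Open Scope classical_set_scope.

Definition enorm {R : realType} {d : nat} (v : 'rV[R]_d) : R :=
  Num.sqrt (\sum_(i < d) v ord0 i ^+ 2).

(* An ordered partition (S_1,...,S_k) of {1..n} is encoded by its assignment
   sigma : 'I_n -> 'I_k, with S_j = [set i | sigma i == j]. *)

Definition ccost {R : realType} {n d k : nat} (p : 'I_n -> 'rV[R]_d)
  (sigma : {ffun 'I_n -> 'I_k}) (c : 'I_k -> 'rV[R]_d) : R :=
  (n%:R)^-1 * \sum_(j < k) \sum_(i < n | sigma i == j) enorm (p i - c j).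

Definition mu_opt {R : realType} {n d k : nat} (p : 'I_n -> 'rV[R]_d)
  (F : {set {ffun 'I_n -> 'I_k}}) : R :=
  inf [set x : R | exists sigma, exists c : 'I_k -> 'rV[R]_d,
                     sigma \in F /\ x = ccost p sigma c].

(* unconstrained k-median cost omega of the center set {c_1..c_k}:
   (1/n) sum_i min_j ||p_i - c_j|| (min of a finite nonempty set, k >= 1). *)
Definition kmed_cost {R : realType} {n d k : nat} (p : 'I_n -> 'rV[R]_d)
  (c : 'I_k -> 'rV[R]_d) : R :=
  (n%:R)^-1 * \sum_(i < n) inf (range (fun j : 'I_k => enorm (p i - c j))).

Definition kmed_opt {R : realType} {n d : nat} (k : nat) (p : 'I_n -> 'rV[R]_d) : R :=
  inf [set x : R | exists c : 'I_k -> 'rV[R]_d, x = kmed_cost p c].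

Definition lambda_approx {R : realType} {n d k : nat} (p : 'I_n -> 'rV[R]_d)
  (lambda : R) (c : 'I_k -> 'rV[R]_d) : Prop :=
  kmed_cost p c <= lambda * kmed_opt k p.

(* Main.v *)
Require Import Defs.
From HB Require Import structures.
From mathcomp Require Import all_boot all_order all_algebra.
From mathcomp Require Import classical_sets reals ring lra.
Import Order.TTheory GRing.Theory Num.Theory.
Local Open Scope ring_scope.

Lemma cs (R : realType) d (a b : 'I_d -> R) :
  (\sum_i a i * b i) ^+ 2 <= (\sum_i a i ^+ 2) * (\sum_i b i ^+ 2).
Proof.
have hX : (\sum_i a i ^+ 2) * (\sum_i b i ^+ 2) =
   \sum_i \sum_j (a i ^+ 2 * b j ^+ 2).
  by rewrite big_distrl; apply: eq_bigr => i _; rewrite big_distrr.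
have hX' : (\sum_i a i ^+ 2) * (\sum_i b i ^+ 2) =
   \sum_i \sum_j (b i ^+ 2 * a j ^+ 2).
  by rewrite mulrC big_distrl; apply: eq_bigr => i _; rewrite big_distrr.
have hY : (\sum_i a i * b i) ^+ 2 = \sum_i \sum_j ((a i * b i) * (a j * b j)).
  by rewrite expr2 big_distrl; apply: eq_bigr => i _; rewrite big_distrr.
have hZ : \sum_i \sum_j (a i * b j - a j * b i) ^+ 2 =
   \sum_i \sum_j (a i ^+ 2 * b j ^+ 2) + \sum_i \sum_j (b i ^+ 2 * a j ^+ 2)
   - 2 * \sum_i \sum_j ((a i * b i) * (a j * b j)).
  rewrite mulr_sumr -big_split -sumrB /=; apply: eq_bigr => i _.
  rewrite mulr_sumr -big_split -sumrB /=; apply: eq_bigr => j _.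
  ring.
have h0 : 0 <= \sum_i \sum_j (a i * b j - a j * b i) ^+ 2.
  by apply: sumr_ge0 => i _; apply: sumr_ge0 => j _; apply: sqr_ge0.
rewrite hZ -hX -hX' -hY in h0.
lra.
Qed.

Lemma enorm_triangle (R : realType) d (u v : 'rV[R]_d) :
  enorm (u + v) <= enorm u + enorm v.
Proof.
rewrite /enorm.
set A := \sum_i u ord0 i ^+ 2.
set B := \sum_i v ord0 i ^+ 2.
have A0 : 0 <= A by apply: sumr_ge0 => i _; apply: sqr_ge0.
have B0 : 0 <= B by apply: sumr_ge0 => i _; apply: sqr_ge0.
have hs : \sum_i (u + v) ord0 i ^+ 2 = A + B + 2 * \sum_i u ord0 i * v ord0 i.
  rewrite /A /B mulr_sumr -!big_split /=; apply: eq_bigr => i _.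
  rewrite mxE; ring.
have hcs := @cs _ _ (fun i => u ord0 i) (fun i => v ord0 i).
have hS : \sum_i u ord0 i * v ord0 i <= Num.sqrt A * Num.sqrt B.
  rewrite -sqrtrM //.
  apply: le_trans (ler_norm _) _.
  rewrite -sqrtr_sqr.
  by rewrite ler_wsqrtr.
rewrite hs.
have sA := sqrtr_ge0 A; have sB := sqrtr_ge0 B.
rewrite -(ger0_norm (addr_ge0 sA sB)) -sqrtr_sqr ler_wsqrtr //.
rewrite sqrrD !sqr_sqrtr //.
lra.
Qed.

Local Open Scope classical_set_scope.

Lemma enorm_ge0 (R : realType) d (u : 'rV[R]_d) : 0 <= enorm u.
Proof. exact: sqrtr_ge0. Qed.

Lemma enormN (R : realType) d (u : 'rV[R]_d) : enorm (- u) = enorm u.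
Proof. by rewrite /enorm; congr Num.sqrt; apply: eq_bigr => i _; rewrite mxE sqrrN. Qed.

Lemma enormB (R : realType) d (u v : 'rV[R]_d) : enorm (u - v) = enorm (v - u).
Proof. by rewrite -enormN opprB. Qed.

Lemma inf_range_le (R : realType) k (g : 'I_k -> R) j :
  (forall j, 0 <= g j) -> inf (range g) <= g j.
Proof.
move=> g0; apply: ge_inf; last by exists j.
by exists 0 => _ [j' _ <-].
Qed.

Lemma le_inf_range (R : realType) k (g : 'I_k -> R) (j0 : 'I_k) x :
  (forall j, x <= g j) -> x <= inf (range g).
Proof.
move=> h; apply: lb_le_inf; first by exists (g j0), j0.
by move=> _ [j _ <-].
Qed.

Lemma ccostE (R : realType) n d k (p : 'I_n -> 'rV[R]_d)
  (sigma : {ffun 'I_n -> 'I_k}) (c : 'I_k -> 'rV[R]_d) :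
  ccost p sigma c = n%:R^-1 * \sum_i enorm (p i - c (sigma i)).
Proof.
rewrite /ccost; congr (_ * _).
under eq_bigr do rewrite big_mkcond.
rewrite exchange_big /=; apply: eq_bigr => i _.
rewrite -big_mkcond /= (big_pred1 (sigma i)) // => j; by rewrite /= eq_sym.
Qed.

Lemma ccost_ge0 (R : realType) n d k (p : 'I_n -> 'rV[R]_d)
  (sigma : {ffun 'I_n -> 'I_k}) (c : 'I_k -> 'rV[R]_d) : 0 <= ccost p sigma c.
Proof.
rewrite ccostE; apply: mulr_ge0; first by rewrite invr_ge0.
by apply: sumr_ge0 => i _; apply: enorm_ge0.
Qed.

Lemma key (R : realType) n d k (p : 'I_n -> 'rV[R]_d) (lambda : R)
  (c : 'I_k -> 'rV[R]_d) (j0 : 'I_k) :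
  0 <= lambda -> lambda_approx p lambda c ->
  forall (sigma : {ffun 'I_n -> 'I_k}) (c' : 'I_k -> 'rV[R]_d),
  exists f : {ffun 'I_k -> 'I_k},
    ccost p sigma (fun j => c (f j)) <= (lambda + 2) * ccost p sigma c'.
Proof.
move=> l0 hap sigma c'.
pose f := [ffun j => Order.arg_min j0 xpredT (fun j' => enorm (c' j - c j'))].
have hf : forall j j', enorm (c' j - c (f j)) <= enorm (c' j - c j').
  move=> j j'; rewrite /f ffunE.
  by case: arg_minP => //= i _ H; apply: H.
exists f.
pose D (e : 'I_k -> 'rV[R]_d) i := inf (range (fun j => enorm (p i - e j))).
have hD : forall e i j, D e i <= enorm (p i - e j).
  by move=> e i j; apply: inf_range_le => j'; apply: enorm_ge0.
have D0 : forall e i, 0 <= D e i.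
  by move=> e i; apply: (@le_inf_range _ _ _ j0) => j'; apply: enorm_ge0.
have hpt : forall i j, enorm (p i - c (f j)) <= 2 * enorm (p i - c' j) + D c i.
  move=> i j.
  have t1 : enorm (p i - c (f j)) <= enorm (p i - c' j) + enorm (c' j - c (f j)).
    have -> : p i - c (f j) = (p i - c' j) + (c' j - c (f j)).
      by rewrite addrA subrK.
    exact: enorm_triangle.
  have t2 : enorm (c' j - c (f j)) - enorm (p i - c' j) <= D c i.
    apply: (@le_inf_range _ _ _ j0) => j'.
    rewrite lerBlDl; apply: le_trans (hf j j') _.
    have -> : c' j - c j' = (c' j - p i) + (p i - c j') by rewrite addrA subrK.
    by rewrite (@enormB _ _ (p i) (c' j)); apply: enorm_triangle.
  lra.
have kc : forall e : 'I_k -> 'rV[R]_d, 0 <= kmed_cost p e.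
  move=> e; rewrite /kmed_cost; apply: mulr_ge0; first by rewrite invr_ge0.
  by apply: sumr_ge0 => i _; apply: D0.
have ko : kmed_opt k p <= kmed_cost p c'.
  apply: ge_inf; last by exists c'.
  by exists 0 => _ [e ->].
have kc' : kmed_cost p c' <= ccost p sigma c'.
  rewrite ccostE /kmed_cost; apply: ler_wpM2l; first by rewrite invr_ge0.
  by apply: ler_sum => i _; apply: hD.
have n0 : 0 <= (n%:R : R)^-1 by rewrite invr_ge0.
have s1 : ccost p sigma (fun j => c (f j)) <=
   2 * ccost p sigma c' + kmed_cost p c.
  rewrite !ccostE /kmed_cost mulrCA -mulrDr; apply: ler_wpM2l => //.
  rewrite mulr_sumr -big_split /=; apply: ler_sum => i _; exact: hpt.
have s2 : lambda * kmed_opt k p <= lambda * ccost p sigma c'.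
  by apply: ler_wpM2l => //; apply: le_trans ko kc'.
move: hap; rewrite /lambda_approx => hap.
lra.
Qed.

Local Close Scope classical_set_scope.
From mathcomp Require Import finset.

Theorem theorem11 (R : realType) (n d k : nat) (p : 'I_n -> 'rV[R]_d)
  (F : {set {ffun 'I_n -> 'I_k}}) (lambda : R) (c : 'I_k -> 'rV[R]_d) :
  (1 <= k)%N -> F != set0 -> 1 <= lambda -> lambda_approx p lambda c ->
  exists f : 'I_k -> 'I_k, exists2 sigma, sigma \in F &
    ccost p sigma (fun j => c (f j)) <= (3 * lambda + 2) * mu_opt p F.
Proof.
move=> k1 /set0Pn [s0 Hs0] l1 hap.
have j0 : 'I_k by exact: (Ordinal k1).
pose G (x : {ffun 'I_k -> 'I_k} * {ffun 'I_n -> 'I_k}) :=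
  ccost p x.2 (fun j => c (x.1 j)).
pose x0 := ([ffun j : 'I_k => j], s0).
case: (@arg_minP _ _ _ x0 (fun x => x.2 \in F) G) => //= x Hx Hmin.
exists x.1; exists x.2 => //.
rewrite -/(G x).
have ne : nonempty [set y : R | exists sigma, exists c : 'I_k -> 'rV[R]_d,
                     sigma \in F /\ y = ccost p sigma c]%classic.
  by exists (ccost p s0 c), s0, c.
have mu0 : 0 <= mu_opt p F.
  apply: lb_le_inf => // _ [s [e [_ ->]]]; exact: ccost_ge0.
have l0 : 0 <= lambda by lra.
have hl : 0 < lambda + 2 by lra.
have hm : G x / (lambda + 2) <= mu_opt p F.
  apply: lb_le_inf => // _ [s [e [Hs ->]]].
  have [f Hf] := @key _ _ _ _ p lambda c j0 l0 hap s e.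
  rewrite ler_pdivrMr // mulrC; apply: le_trans Hf.
  exact: (Hmin (f, s)).
move: hm; rewrite ler_pdivrMr // => hm.
nra.
Qed.
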